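(* Let $n\ge 1$ and $k\ge 1$ be integers and set $m=n+2k$. Let $L=\{x_1,\dots,x_n\}$ and $L'=\{y_1,\dots,y_m\}$ be finite sets of cells, and let there be $2k+1$ actions $u_1,\dots,u_{2k+1}$ such that applying action $u_j$ at cell $x_i$ leads to cell $y_{i+j-1}$. Define action probabilities $$p(x_i,u_1)=\frac{n-i+1}{m},\qquad p(x_i,u_j)=\frac{1}{m}\ (2\le j\le 2k),\qquad p(x_i,u_{2k+1})=\frac{i}{m}.$$ Then (1) $\sum_{j=1}^{2k+1} p(x_i,u_j)=1$ for every $i\in\{1,\dots,n\}$, and (2) if the distribution on $L$ is uniform, $p(x_i)=1/n$ for all $i$, then the induced distribution on $L'$, given by $p(y_l)=\sum_{i=1}^n\sum_{j:\, i+j-1=l} p(x_i,u_j)\,p(x_i)$, satisfies $p(y_l)=1/m$ for every $l\in\{1,\dots,m\}$.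
   Context: This models the one-dimensional system $x_{t+1}=x_t+u$ with $u\in[-1,1]$, where two consecutive reachable level sets $L$ (at time $t$) and $L'$ (at time $t+1$) are discretized into consecutive cells of equal length, $L$ having $n$ cells and $L'$ having $n+2k$ cells, and $2k+1$ uniformly spaced control inputs shift a cell by $-k,\dots,k$ cells. A level set is C-uniform if the probability distribution of the robot's state over its cells is uniform. *)

(* Defs.v *)
From mathcomp Require Import all_boot all_order all_algebra.
Set Implicit Arguments. Unset Strict Implicit. Unset Printing Implicit Defensive.
Import Order.TTheory GRing.Theory Num.Theory.
Local Open Scope ring_scope.

(* Cells x_1..x_n of L, y_1..y_m of L' (m = n + 2k), actions u_1..u_{2k+1};
   all indices are 1-based natural numbers. Action u_j at x_i leads to y_{i+j-1}. *)

Definition mcells (n k : nat) : nat := (n + 2 * k)%N.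

Definition p_act (R : realFieldType) (n k i j : nat) : R :=
  if j == 1%N then (n - i + 1)%:R / (mcells n k)%:R
  else if j == (2 * k + 1)%N then i%:R / (mcells n k)%:R
  else 1 / (mcells n k)%:R.

Definition p_induced (R : realFieldType) (n k : nat) (px : nat -> R) (l : nat) : R :=
  \sum_(1 <= i < n.+1) \sum_(1 <= j < (2 * k + 1).+1 | (i + j - 1)%N == l)
     p_act R n k i j * px i.

(* Main.v *)
Require Import Defs.
From mathcomp Require Import all_boot all_order all_algebra zify.
Import Order.TTheory GRing.Theory Num.Theory.
Local Open Scope ring_scope.

Lemma sum_if_eq (V : nmodType) (a b c : nat) (F : nat -> V) :
  \sum_(a <= i < b) (if i == c then F i else 0) = if (a <= c < b)%N then F c else 0.
Proof.
elim: b => [|b IH]; first by rewrite big_geq //; case: ifP => //; lia.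
case: (leqP a b) => hab.
  rewrite big_nat_recr //= IH.
  case: eqP => [<-|hne].
    have -> : (a <= b < b.+1)%N by lia.
    have -> : (a <= b < b)%N = false by lia.
    by rewrite add0r.
  rewrite addr0; congr (if _ then _ else _); apply/idP/idP; lia.
rewrite big_geq //; case: ifP => //; lia.
Qed.

Lemma sumn_if_eq (a b c : nat) :
  (\sum_(a <= i < b) (i == c) = (a <= c < b))%N.
Proof.
have := @sum_if_eq nat a b c (fun _ => 1%N).
have -> : (\sum_(a <= i < b) (i == c) = \sum_(a <= i < b) (if i == c then 1 else 0))%N.
  by apply: eq_bigr => i _; case: eqP.
move=> ->; by case: ifP.
Qed.

Ltac bash := repeat match goal with
 | |- context [if ?b then _ else _] => lazymatch b with true => fail | false => fail | _ => let H := fresh in case H: b end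
 | |- context [nat_of_bool ?b] => lazymatch b with true => fail | false => fail | _ => let H := fresh in case H: b end
 end; rewrite /=; lia.

Definition w (n k l i : nat) : nat :=
  if (1 <= l + 1 - i < (2 * k + 1).+1)%N then
    (if (l + 1 - i == 1)%N then (n - i + 1)%N
     else if (l + 1 - i == 2 * k + 1)%N then i else 1%N)
  else 0%N.

Lemma wsum (k : nat) : (1 <= k)%N -> forall n l, (1 <= l)%N ->
  (\sum_(1 <= i < n.+1) w n k l i = if (l <= n + 2 * k)%N then n else 0)%N.
Proof.
move=> hk; elim=> [|n IH] l hl.
  by rewrite big_geq //; case: ifP.
rewrite big_nat_recr //=.
have -> : (\sum_(1 <= i < n.+1) w n.+1 k l i =
           \sum_(1 <= i < n.+1) (w n k l i + (i == l)))%N.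
  apply: eq_big_nat => i hi; rewrite /w.
  case: (eqVneq i l) => [eil|hne]; first rewrite eil in hi *.
    have -> : (l + 1 - l = 1)%N by lia.
    have -> : (0 < 1 < (2*k+1).+1)%N by lia. rewrite eqxx /=; lia.
  rewrite addn0; case: ifP => // _; case: ifP => // h1.
  move/eqP: h1 => h1; lia.
rewrite big_split /= sumn_if_eq IH // /w.
bash.
Qed.

From mathcomp Require Import ring lra.

Theorem mainTheorem1 (R : realFieldType) (n k : nat) :
  (1 <= n)%N -> (1 <= k)%N ->
  (forall i : nat, (1 <= i <= n)%N ->
     \sum_(1 <= j < (2 * k + 1).+1) p_act R n k i j = 1) /\
  (forall px : nat -> R,
     (forall i : nat, (1 <= i <= n)%N -> px i = 1 / n%:R) ->
     forall l : nat, (1 <= l <= mcells n k)%N ->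
       p_induced n k px l = 1 / (mcells n k)%:R).
Proof.
move=> hn hk.
have hm : (mcells n k)%:R != 0 :> R by rewrite pnatr_eq0 /mcells; lia.
have hn0 : n%:R != 0 :> R by rewrite pnatr_eq0; lia.
split.
  move=> i hi.
  pose v j := if j == 1%N then (n - i + 1)%N else if j == (2 * k + 1)%N then i else 1%N.
  have E : forall j, p_act R n k i j = (v j)%:R / (mcells n k)%:R.
    by move=> j; rewrite /p_act /v; case: ifP => _ //; case: ifP.
  rewrite (eq_bigr _ (fun j _ => E j)) -mulr_suml -natr_sum.
  have -> : (\sum_(1 <= j < (2 * k + 1).+1) v j = mcells n k)%N.
    rewrite big_nat_recl; last lia.
    have -> : (2 * k + 1 = (2 * k).+1)%N by lia.
    rewrite big_nat_recr /=; last lia.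
    rewrite (eq_big_nat _ _ (F2 := fun _ => 1%N)); last first.
      move=> j hj; rewrite /v; bash.
    rewrite sum_nat_const_nat /v /mcells; bash.
  by rewrite divff.
move=> px hpx l hl.
rewrite /p_induced.
rewrite (eq_big_nat _ _ (F2 := fun i => (w n k l i)%:R / (mcells n k)%:R * (1 / n%:R))); last first.
  move=> i hi.
  rewrite big_mkcond /=.
  have -> : \sum_(1 <= j < (2 * k + 1).+1)
      (if (i + j - 1)%N == l then p_act R n k i j * px i else 0) =
      \sum_(1 <= j < (2 * k + 1).+1)
      (if j == (l + 1 - i)%N then p_act R n k i j * px i else 0).
    apply: eq_big_nat => j hj.
    have -> : ((i + j - 1)%N == l) = (j == (l + 1 - i)%N) by apply/idP/idP => /eqP h; apply/eqP; lia.
    by [].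
  rewrite sum_if_eq hpx; last lia.
  rewrite /w /p_act; repeat (case: ifP => ?); rewrite ?mul0r ?mulr0 ?mul1r //; try lia.
rewrite -mulr_suml -mulr_suml -natr_sum wsum //; last lia.
have -> : (l <= n + 2 * k)%N by rewrite /mcells in hl; lia.
by field; apply/andP; split.
Qed.
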